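(* In the setting of the context, $F=E_M\circ E_{M_1}$ restricts to a faithful linear functional $F:C\to k$; i.e. for $c\in C$, $F(cC)=0$ implies $c=0$.
   Context: $k$ is a field; $C_R(S)=\{r\in R:rs=sr\ \forall s\in S\}$. $N\subseteq M$ is a strongly separable, irreducible extension of $k$-algebras: $C_M(N)=k1$ and there are an $N$-bimodule map $E:M\to N$ and $x_1,\dots,x_n,y_1,\dots,y_n\in M$ with $\sum_iE(mx_i)y_i=m=\sum_ix_iE(y_im)$ for all $m\in M$, $E(1)\neq0$, $\sum_ix_iy_i\neq0$; normalized so that $E(1)=1$, whence $\sum_ix_iy_i=\lambda^{-1}1$ with $0\neq\lambda\in k$. Basic construction: given $S\subseteq R$, an $S$-bimodule map $E_S:R\to S$ with $E_S(1)=1$ and $r_i,s_i\in R$ with $\sum_iE_S(rr_i)s_i=r=\sum_ir_iE_S(s_ir)$ and $\sum_ir_is_i=\lambda^{-1}1$, set $R_1=R\otimes_SR$ with product $(a\otimes b)(c\otimes d)=aE_S(bc)\otimes d$, unit $\sum_ir_i\otimes s_i$, $R\subseteq R_1$ via $r\mapsto\sum_irr_i\otimes s_i$, $E_R:R_1\to R$, $a\otimes b\mapsto\lambda ab$; then $E_R$, $\lambda^{-1}r_i\otimes1$, $1\otimes s_i$ satisfy the same conditions with the same $\lambda$. From $(N\subseteq M,E)$ get $M_1,E_M$; from $(M\subseteq M_1,E_M)$ get $M_2,E_{M_1}$. Let $A=C_{M_1}(N)$, $B=C_{M_2}(M)$, $C=C_{M_2}(N)$. Depth 2 is assumed: $M_1$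 is free as right $M$-module with basis in $A$, $M_2$ free as right $M_1$-module with basis in $B$. For $c\in C$, $E_M(E_{M_1}(c))\in C_M(N)=k1$, identified with $k$. *)

(* Defs.v *)
From HB Require Import structures.
From mathcomp Require Import all_boot all_order all_algebra.
Set Implicit Arguments.
Unset Strict Implicit.
Unset Printing Implicit Defensive.
Import GRing.Theory.
Local Open Scope ring_scope.

Definition centralizes (R : pzRingType) (S : R -> Prop) (x : R) : Prop :=
  forall s, S s -> x * s = s * x.

Definition bilinear_balanced (k : fieldType) (R : algType k) (S : R -> Prop)
  (V : lmodType k) (phi : R -> R -> V) : Prop :=
  [/\ (forall (a : k) (u v b : R), phi (a *: u + v) b = a *: phi u b + phi v b),
      (forall (a : k) (u v b : R), phi b (a *: u + v) = a *: phi b u + phi b v)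
    & (forall s u v : R, S s -> phi (u * s) v = phi u (s * v))].

(* R1 (with tens a b = a (x)_S b) is the basic construction R (x)_S R of
   (S subset R, E_S) with quasi-basis (r_i, s_i), embedding iota : R -> R1
   and conditional expectation E_R : R1 -> R.
   tens : R x R -> R1 is a tensor product over S (universal S-balanced
   k-bilinear map whose values span R1), the product is
   (a(x)b)(c(x)d) = a E_S(bc) (x) d, the unit is sum_i r_i (x) s_i,
   iota r = sum_i r r_i (x) s_i and E_R is the k-linear map a(x)b |-> lam ab. *)
Definition is_basic_construction (k : fieldType) (R : algType k)
  (S : R -> Prop) (ES : R -> R) (lam : k) (n : nat) (r s : 'I_n -> R)
  (R1 : algType k) (tens : R -> R -> R1) (iota : R -> R1) (ER : R1 -> R) : Prop :=
  bilinear_balanced S tens /\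
      (forall (V : lmodType k) (phi : R -> R -> V), bilinear_balanced S phi ->
         exists f : R1 -> V,
           (forall (a : k) (u v : R1), f (a *: u + v) = a *: f u + f v) /\
           (forall u v : R, f (tens u v) = phi u v)) /\
      (forall z : R1, exists l : seq (R * R), z = \sum_(p <- l) tens p.1 p.2) /\
      (forall a b c d : R, tens a b * tens c d = tens (a * ES (b * c)) d) /\
      1 = \sum_(i < n) tens (r i) (s i) /\
      (forall u : R, iota u = \sum_(i < n) tens (u * r i) (s i)) /\
      (forall (a : k) (u v : R1), ER (a *: u + v) = a *: ER u + ER v) /\
      (forall u v : R, ER (tens u v) = lam *: (u * v)).

(* Main.v *)
Require Import Defs.
From HB Require Import structures.
From mathcomp Require Import all_boot all_order all_algebra.
Import GRing.Theory.
Local Open Scope ring_scope.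
Set Implicit Arguments. Unset Strict Implicit.

Lemma lin0 (k : fieldType) (U V : lmodType k) (f : U -> V)
  (H : forall (a : k) u v, f (a *: u + v) = a *: f u + f v) : f 0 = 0.
Proof.
have := H 1 0 0; rewrite scaler0 addr0 scale1r => h.
by apply: (addrI (f 0)); rewrite addr0 -h.
Qed.

Lemma linD (k : fieldType) (U V : lmodType k) (f : U -> V)
  (H : forall (a : k) u v, f (a *: u + v) = a *: f u + f v) u v : f (u + v) = f u + f v.
Proof. by have := H 1 u v; rewrite !scale1r. Qed.

Lemma linZ (k : fieldType) (U V : lmodType k) (f : U -> V)
  (H : forall (a : k) u v, f (a *: u + v) = a *: f u + f v) a u : f (a *: u) = a *: f u.
Proof. by have := H a u 0; rewrite addr0 (lin0 H) addr0. Qed.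

Lemma linS (k : fieldType) (U V : lmodType k) (f : U -> V)
  (H : forall (a : k) u v, f (a *: u + v) = a *: f u + f v) (I : Type) (l : seq I) (F : I -> U) :
  f (\sum_(i <- l) F i) = \sum_(i <- l) f (F i).
Proof.
elim: l => [|i l IH]; first by rewrite !big_nil (lin0 H).
by rewrite !big_cons (linD H) IH.
Qed.

Section BC.
Variables (k : fieldType) (R : algType k) (S : R -> Prop) (ES : R -> R) (lam : k)
  (n : nat) (r s : 'I_n -> R) (R1 : algType k) (tens : R -> R -> R1)
  (iota : R -> R1) (ER : R1 -> R).
Hypothesis HB : is_basic_construction S ES lam r s tens iota ER.
Hypothesis HESS : forall u, S (ES u).
Hypothesis qb1 : forall u, \sum_(i < n) ES (u * r i) * s i = u.
Hypothesis qb2 : forall u, \sum_(i < n) r i * ES (s i * u) = u.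
Hypothesis Hlam : lam != 0.

Lemma tL a u v b : tens (a *: u + v) b = a *: tens u b + tens v b.
Proof. by case: HB => [[]]. Qed.
Lemma tR a u v b : tens b (a *: u + v) = a *: tens b u + tens b v.
Proof. by case: HB => [[]]. Qed.
Lemma tBal x u v : S x -> tens (u * x) v = tens u (x * v).
Proof. by case: HB => [[_ _ h]] _; apply: h. Qed.
Lemma tspan z : exists l : seq (R * R), z = \sum_(p <- l) tens p.1 p.2.
Proof. by case: HB => _ [_ [h _]]. Qed.
Lemma tmul a b c d : tens a b * tens c d = tens (a * ES (b * c)) d.
Proof. by case: HB => _ [_ [_ [h _]]]. Qed.
Lemma tone : 1 = \sum_(i < n) tens (r i) (s i).
Proof. by case: HB => _ [_ [_ [_ [h _]]]]. Qed.
Lemma tiota u : iota u = \sum_(i < n) tens (u * r i) (s i).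
Proof. by case: HB => _ [_ [_ [_ [_ [h _]]]]]. Qed.
Lemma ERlin a u v : ER (a *: u + v) = a *: ER u + ER v.
Proof. by case: HB => _ [_ [_ [_ [_ [_ [h _]]]]]]. Qed.
Lemma ERt u v : ER (tens u v) = lam *: (u * v).
Proof. by case: HB => _ [_ [_ [_ [_ [_ [_ h]]]]]]. Qed.

Lemma tsumL (I : Type) (l : seq I) F b :
  tens (\sum_(i <- l) F i) b = \sum_(i <- l) tens (F i) b.
Proof. exact: (linS (f := fun u => tens u b) (fun a u v => tL a u v b)). Qed.
Lemma tsumR (I : Type) (l : seq I) F b :
  tens b (\sum_(i <- l) F i) = \sum_(i <- l) tens b (F i).
Proof. exact: (linS (f := fun u => tens b u) (fun a u v => tR a u v b)). Qed.
Lemma ERsum (I : Type) (l : seq I) F : ER (\sum_(i <- l) F i) = \sum_(i <- l) ER (F i).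
Proof. exact: (linS ERlin). Qed.
Lemma ERZ a u : ER (a *: u) = a *: ER u.
Proof. exact: (linZ ERlin). Qed.
Lemma t0L b : tens 0 b = 0.
Proof. exact: (lin0 (f := fun u => tens u b) (fun a u v => tL a u v b)). Qed.
Lemma tZL a u b : tens (a *: u) b = a *: tens u b.
Proof. exact: (linZ (f := fun u => tens u b) (fun a u v => tL a u v b)). Qed.

Lemma iotalin a u v : iota (a *: u + v) = a *: iota u + iota v.
Proof.
rewrite !tiota scaler_sumr -big_split /=; apply: eq_bigr => i _.
by rewrite mulrDl -scalerAl tL.
Qed.
Lemma iotasum (I : Type) (l : seq I) F : iota (\sum_(i <- l) F i) = \sum_(i <- l) iota (F i).
Proof. exact: (linS iotalin). Qed.
Lemma iotaZ a u : iota (a *: u) = a *: iota u.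
Proof. exact: (linZ iotalin). Qed.
Lemma iota0 : iota 0 = 0.
Proof. exact: (lin0 iotalin). Qed.

Lemma G1 u a b : iota u * tens a b = tens (u * a) b.
Proof.
rewrite tiota mulr_suml; under eq_bigr do rewrite tmul.
by rewrite -{2}(qb2 a) mulr_sumr tsumL; apply: eq_bigr => i _; rewrite mulrA.
Qed.
Lemma G2 u a b : tens a b * iota u = tens a (b * u).
Proof.
rewrite tiota mulr_sumr; rewrite -{1}(qb1 (b * u)) tsumR; apply: eq_bigr => i _.
by rewrite tmul tBal // mulrA.
Qed.

Lemma ERl u z : ER (iota u * z) = u * ER z.
Proof.
have [l ->] := tspan z.
rewrite mulr_sumr !ERsum mulr_sumr; apply: eq_bigr => p _.
by rewrite G1 !ERt -scalerAr mulrA.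
Qed.
Lemma ERr u z : ER (z * iota u) = ER z * u.
Proof.
have [l ->] := tspan z.
rewrite mulr_suml !ERsum mulr_suml; apply: eq_bigr => p _.
by rewrite G2 !ERt -scalerAl mulrA.
Qed.

Definition r' i := lam^-1 *: tens (r i) 1.
Definition s' i := tens 1 (s i).

Lemma qb1' z : \sum_(i < n) iota (ER (z * r' i)) * s' i = z.
Proof.
have [l ->] := tspan z.
under eq_bigr do rewrite mulr_suml ERsum iotasum mulr_suml.
rewrite exchange_big /=; apply: eq_bigr => p _.
transitivity (\sum_(i < n) tens p.1 (ES (p.2 * r i) * s i)); last by rewrite -{2}(qb1 p.2) tsumR.
apply: eq_bigr => i _.
rewrite /r' /s' -scalerAr tmul ERZ ERt scalerA mulVf // scale1r mulr1 G1 mulr1.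
by rewrite tBal.
Qed.

Lemma qb2' z : \sum_(i < n) r' i * iota (ER (s' i * z)) = z.
Proof.
have [l ->] := tspan z.
under eq_bigr do rewrite mulr_sumr ERsum iotasum mulr_sumr.
rewrite exchange_big /=; apply: eq_bigr => p _.
transitivity (\sum_(i < n) tens (r i * ES (s i * p.1)) p.2); last by rewrite -{2}(qb2 p.1) tsumL.
apply: eq_bigr => i _.
rewrite /r' /s' tmul ERt iotaZ -scalerAl -scalerAr scalerA mulVf // scale1r.
by rewrite G2 mul1r mul1r tBal.
Qed.

Lemma rs' : ES 1 = 1 -> \sum_(i < n) r' i * s' i = lam^-1%:A.
Proof.
move=> h; rewrite tone scaler_sumr; apply: eq_bigr => i _.
by rewrite /r' /s' -scalerAl tmul mulr1 h mulr1.
Qed.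

Lemma G6 z a : z * tens a 1 = tens (lam^-1 *: ER (z * tens a 1)) 1.
Proof.
have [w hw] : exists w, z * tens a 1 = tens w 1.
  have [l ->] := tspan z.
  exists (\sum_(p <- l) p.1 * ES (p.2 * a)).
  by rewrite mulr_suml tsumL; apply: eq_bigr => p _; rewrite tmul.
by rewrite hw ERt mulr1 scalerA mulVf // scale1r.
Qed.

End BC.

Unset Implicit Arguments. Set Strict Implicit.

Theorem proposition3p8 (k : fieldType) (M : algType k) (N : M -> Prop)
  (HN1 : N 1)
  (HNadd : forall u v, N u -> N v -> N (u + v))
  (HNmul : forall u v, N u -> N v -> N (u * v))
  (HNscale : forall (a : k) u, N u -> N (a *: u))
  (Hirr : forall m : M, centralizes N m -> exists a : k, m = a%:A)
  (E : M -> M)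
  (HEN : forall m, N (E m))
  (HEadd : forall u v, E (u + v) = E u + E v)
  (HEbimod : forall n1 m n2, N n1 -> N n2 -> E (n1 * m * n2) = n1 * E m * n2)
  (nq : nat) (x y : 'I_nq -> M)
  (Hqb1 : forall m, \sum_(i < nq) E (m * x i) * y i = m)
  (Hqb2 : forall m, \sum_(i < nq) x i * E (y i * m) = m)
  (HE1 : E 1 = 1)
  (lam : k) (Hlam : lam != 0)
  (Hxy : \sum_(i < nq) x i * y i = lam^-1%:A)
  (M1 : algType k) (tens1 : M -> M -> M1) (iota1 : M -> M1) (EM : M1 -> M)
  (HM1 : is_basic_construction N E lam x y tens1 iota1 EM)
  (M2 : algType k) (tens2 : M1 -> M1 -> M2) (iota2 : M1 -> M2) (EM1 : M2 -> M1)
  (HM2 : is_basic_construction (fun z : M1 => exists m, z = iota1 m)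
           (fun z => iota1 (EM z)) lam
           (fun i => lam^-1 *: tens1 (x i) 1) (fun i => tens1 1 (y i))
           tens2 iota2 EM1)
  (Hdepth1 : exists (d : nat) (u : 'I_d -> M1),
      [/\ (forall i, centralizes (fun z => exists n, N n /\ z = iota1 n) (u i)),
          (forall z : M1, exists c : 'I_d -> M, z = \sum_(i < d) u i * iota1 (c i))
        & (forall c c' : 'I_d -> M,
             \sum_(i < d) u i * iota1 (c i) = \sum_(i < d) u i * iota1 (c' i) ->
             forall i, c i = c' i)])
  (Hdepth2 : exists (d : nat) (v : 'I_d -> M2),
      [/\ (forall i, centralizes (fun z => exists m, z = iota2 (iota1 m)) (v i)),
          (forall z : M2, exists c : 'I_d -> M1, z = \sum_(i < d) v i * iota2 (c i))
        & (forall c c' : 'I_d -> M1,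
             \sum_(i < d) v i * iota2 (c i) = \sum_(i < d) v i * iota2 (c' i) ->
             forall i, c i = c' i)]) :
  let inC := centralizes (fun z => exists n, N n /\ z = iota2 (iota1 n)) in
  (forall c, inC c -> exists a : k, EM (EM1 c) = a%:A) /\
  (forall c, inC c -> (forall c', inC c' -> EM (EM1 (c * c')) = 0) -> c = 0).
Proof.
move=> inC.
have HESS2 : forall u : M1, (fun z => exists m, z = iota1 m) ((fun z => iota1 (EM z)) u).
  by move=> u; exists (EM u).
have Q1 : forall u, \sum_(i < nq) iota1 (EM (u * (lam^-1 *: tens1 (x i) 1))) * tens1 1 (y i) = u.
  exact: (qb1' HM1 HEN Hqb1 Hqb2 Hlam).
have Q2 : forall u, \sum_(i < nq) (lam^-1 *: tens1 (x i) 1) * iota1 (EM (tens1 1 (y i) * u)) = u.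
  exact: (qb2' HM1 HEN Hqb1 Hqb2 Hlam).
have G1b := G1 HM2 Q2.
have G2b := G2 HM2 HESS2 Q1.
have ERlb := ERl HM2 Q2.
have ERrb := ERr HM2 HESS2 Q1.
have ERla := ERl HM1 Hqb2.
have ERra := ERr HM1 HEN Hqb1.
have G6b := G6 HM2 Hlam.
have tBalb : forall u v m, tens2 (u * iota1 m) v = tens2 u (iota1 m * v).
  by move=> u v m; apply: (tBal HM2); exists m.
split.
  move=> c hc; apply: Hirr => nn hn.
  rewrite -ERra -ERla -ERrb -ERlb.
  by rewrite (hc _ (ex_intro _ nn (conj hn erefl))).
move=> c hc Hc.
pose Phi a := lam^-1 *: EM1 (c * tens2 a 1).
have hPhi : forall a, c * tens2 a 1 = tens2 (Phi a) 1 by move=> a; exact: G6b.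
have e2 : forall a b, tens2 a b = tens2 a 1 * iota2 b by move=> a b; rewrite G2b mul1r.
have hPhiR : forall a m, Phi (a * iota1 m) = Phi a * iota1 m.
  move=> a m; rewrite /Phi tBalb mulr1 e2 mulrA ERrb -scalerAl //.
pose A1 := centralizes (fun z => exists n, N n /\ z = iota1 n).
have hC : forall a b, A1 a -> A1 b -> inC (tens2 a b).
  move=> a b ha hb s [nn [hn ->]].
  rewrite G2b G1b (hb _ (ex_intro _ nn (conj hn erefl))).
  by rewrite -(ha _ (ex_intro _ nn (conj hn erefl))) tBalb.
have hF : forall a b, A1 a -> A1 b -> EM (Phi a * b) = 0.
  move=> a b ha hb; have := Hc _ (hC a b ha hb).
  rewrite e2 mulrA hPhi -e2 (ERt HM2) (ERZ HM1) => /eqP.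
  by rewrite scaler_eq0 (negbTE Hlam) /= => /eqP.
have [d [u [hu hspan _]]] := Hdepth1.
have hG : forall a, A1 a -> Phi a = 0.
  move=> a ha.
  have h0 : forall z, EM (Phi a * z) = 0.
    move=> z; have [cc ->] := hspan z.
    rewrite mulr_sumr (ERsum HM1) big1 // => i _.
    by rewrite mulrA ERra hF ?mul0r //; apply: hu.
  rewrite -(Q1 (Phi a)) big1 // => i _.
  by rewrite h0 (iota0 HM1) mul0r.
have hPhi0 : forall z, Phi z = 0.
  move=> z; have [cc ->] := hspan z.
  rewrite /Phi (tsumL HM2) mulr_sumr (ERsum HM2) scaler_sumr big1 // => i _.
  change (Phi (u i * iota1 (cc i)) = 0).
  by rewrite hPhiR hG ?mul0r //; apply: hu.
rewrite -[c]mulr1 (tone HM2) mulr_sumr big1 // => i _.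
by rewrite e2 mulrA hPhi hPhi0 (t0L HM2) mul0r.
Qed.
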